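(* Let $\epsilon>0$ and let $G=(S,B,E)$ be a bipartite graph with weights $w:S\to\mathbb{R}_+$ and a fixed arrival order of $B$. Run $\epsilon$-\textsc{Ranking} with independent uniform samples $x_j\in[0,1]$, $j\in S$. Then for every edge $\{i,j\}\in E$ with $i\in B$, $j\in S$, \[ \mathbb{E}[r_j+u_i]\ge\left(1-\frac{1}{e}-\epsilon\right)w_j. \]
   Context: $\epsilon$-\textsc{Ranking}: for each $j\in S$ sample independently a uniformly random $x_j\in[0,1]$; when buyer $i$ arrives (revealing $N(i)\subseteq S$), match $i$ to an unmatched $j\in N(i)$ maximizing $w_j(1-e^{x_j-1-\epsilon})$ (leave $i$ unmatched if none exists). Revenue: $r_j=w_je^{x_j-1-\epsilon}$ if $j$ is matched at the end, and $r_j=0$ otherwise. Utility: $u_i=w_j(1-e^{x_j-1-\epsilon})$ if buyer $i$ is matched to $j$, and $u_i=0$ if $i$ is unmatched. *)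

(* Defs.v *)
From HB Require Import structures.
From mathcomp Require Import all_boot all_order all_algebra.
From mathcomp Require Import all_classical all_reals all_analysis.
Set Implicit Arguments. Unset Strict Implicit. Unset Printing Implicit Defensive.
Import Order.TTheory GRing.Theory Num.Theory.
Local Open Scope ring_scope.
Local Open Scope classical_set_scope.

(* epsilon-Ranking on a bipartite graph with item side S (finType) and buyer
   side 'I_n (buyers arrive in the order 0, 1, ..., n-1). *)

Section Ranking.
Variables (R : realType) (S : finType) (n : nat).
Variables (E : 'I_n -> S -> bool) (w : S -> R) (eps : R) (x : S -> R).

Definition rk_val (j : S) : R := w j * (1 - expR (x j - 1 - eps)).

(* a maximizer of rk_val in s; ties broken in favour of the earliest in s *)
Definition rk_best (s : seq S) : option S :=
  foldl (fun best j => match best with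
                       | None => Some j
                       | Some b => if rk_val b < rk_val j then Some j else Some b
                       end) None s.

(* state: (set of matched items, assignment of buyers) *)
Definition rk_step (st : {set S} * ('I_n -> option S)) (i : 'I_n)
  : {set S} * ('I_n -> option S) :=
  let avail := [seq j <- enum S | E i j && (j \notin st.1)] in
  match rk_best avail with
  | None => st
  | Some j => (finset.setU [set j] st.1, fun b => if b == i then Some j else st.2 b)
  end.

Definition rk_run : {set S} * ('I_n -> option S) :=
  foldl rk_step (finset.set0, fun _ => None) (enum 'I_n).

Definition rk_rev (j : S) : R :=
  if j \in rk_run.1 then w j * expR (x j - 1 - eps) else 0.

Definition rk_util (i : 'I_n) : R :=
  match rk_run.2 i with
  | Some j => rk_val j
  | None => 0
  end.

End Ranking.

(* Expectation over independent uniform x_j in [0,1], j ranging over the list l,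
   as iterated Lebesgue integrals (the remaining coordinates fixed from x0). *)
Fixpoint iter_unif_exp (R : realType) (S : eqType) (l : seq S)
   (f : (S -> R) -> R) (x0 : S -> R) {struct l} : \bar R :=
  match l with
  | [::] => (f x0)%:E
  | j :: l' => (\int[@lebesgue_measure R]_(t in `[0%R, 1%R])
                 iter_unif_exp l' f (fun k => if k == j then t else x0 k))%E
  end.

Definition unif_exp (R : realType) (S : finType) (f : (S -> R) -> R) : \bar R :=
  iter_unif_exp (enum S) f (fun _ => 0).

(* Main.v *)
Require Import Defs.
From HB Require Import structures.
From mathcomp Require Import all_boot all_order all_algebra.
From mathcomp Require Import all_classical all_reals all_analysis.
From mathcomp Require Import measurable_realfun lebesgue_integral_fubini ftc exp.
From mathcomp Require Import ring lra.
Import Order.TTheory GRing.Theory Num.Theory.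
Set Implicit Arguments. Unset Strict Implicit. Unset Printing Implicit Defensive.
Local Open Scope ring_scope.
Section PartA.
Variables (R : realType) (S : finType) (n : nat).
Variables (w : S -> R) (eps : R) (x : S -> R).

Local Notation val := (rk_val w eps x).

Definition bstep (o : option S) (k : S) : option S :=
  match o with None => Some k | Some b => if val b < val k then Some k else Some b end.

Lemma rk_bestE s : rk_best w eps x s = foldl bstep None s.
Proof. by []. Qed.

Lemma bstep_spec o a : exists c, [/\ bstep o a = Some c, val a <= val c,
  (c = a \/ o = Some c) & (forall c0, o = Some c0 -> val c0 <= val c)].
Proof.
case: o => [b|] /=; last by exists a; split => //; left.
case: ifP => h.
  exists a; split => //; [by left| by move=> c0 [<-]; exact: ltW].
exists b; split => //; [by rewrite leNgt h | by right | by move=> c0 [->]].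
Qed.

Lemma foldl_none o s : foldl bstep o s = None -> o = None /\ s = [::].
Proof.
elim: s o => [|a s IH] o //= /IH [h _].
by have [c [hc _ _ _]] := bstep_spec o a; rewrite hc in h.
Qed.

Lemma foldl_max o s b : foldl bstep o s = Some b ->
  [/\ o = Some b \/ b \in s, (forall k, k \in s -> val k <= val b)
   & (forall c, o = Some c -> val c <= val b)].
Proof.
elim: s o => [|a s IH] o /=.
  by move=> ->; split => //; [left | move=> c [->]].
move=> /IH [h1 h2 h3].
have [c [hc hac hc1 hc2]] := bstep_spec o a.
rewrite hc in h1 h3.
have cb := h3 c erefl.
split.
- case: h1 => [[<-]|bs]; last by right; rewrite inE bs orbT.
  by case: hc1 => [->|->]; [right; rewrite inE eqxx|left].
- move=> k; rewrite inE => /predU1P [->|ks]; last exact: h2.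
  exact: le_trans hac cb.
- by move=> c0 /hc2 h; exact: le_trans h cb.
Qed.

Lemma foldl_decomp s b : foldl bstep None s = Some b ->
  exists s1 s2, [/\ s = s1 ++ b :: s2, all (fun k => val k < val b) s1
   & all (fun k => val k <= val b) s2].
Proof.
elim/last_ind: s b => [|s0 k IH] b //.
rewrite foldl_rcons.
case h0: (foldl bstep None s0) => [c|] /=; last first.
  move: (foldl_none h0) => [_ ->] [<-].
  by exists [::], [::].
have [_ hmax _] := foldl_max h0.
case: ifP => hck [<-].
  exists s0, [::]; split => //; first by rewrite cats1.
  by apply/allP => k' /hmax h; exact: le_lt_trans h hck.
have [s1 [s2 [-> a1 a2]]] := IH _ h0.
exists s1, (rcons s2 k); split => //.
  by rewrite rcons_cat.
by rewrite all_rcons a2 andbT leNgt hck.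
Qed.

Lemma foldl_lt o s v : all (fun k => val k < v) s ->
  (forall c, o = Some c -> val c < v) ->
  forall c, foldl bstep o s = Some c -> val c < v.
Proof.
elim: s o => [|a s IH] o //= /andP[ha hs] ho; apply: IH => // c.
have [c' [-> _ hc1 _]] := bstep_spec o a.
by move=> [<-]; case: hc1 => [->|/ho].
Qed.

Lemma foldl_stay b s : all (fun k => val k <= val b) s ->
  foldl bstep (Some b) s = Some b.
Proof.
elim: s => [|a s IH] //= /andP[ha hs].
by rewrite ltNge ha /=; exact: IH.
Qed.

Lemma foldl_of_decomp s1 b s2 :
  all (fun k => val k < val b) s1 -> all (fun k => val k <= val b) s2 ->
  foldl bstep None (s1 ++ b :: s2) = Some b.
Proof.
move=> h1 h2; rewrite foldl_cat /=.
suff -> : bstep (foldl bstep None s1) b = Some b by exact: foldl_stay.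
case h: (foldl bstep None s1) => [c|] //=.
by rewrite (foldl_lt h1 _ h).
Qed.

Lemma best_filter (P : pred S) s a : rk_best w eps x s = Some a -> P a ->
  rk_best w eps x (seq.filter P s) = Some a.
Proof.
rewrite !rk_bestE => /foldl_decomp [s1 [s2 [-> h1 h2]]] Pa.
rewrite filter_cat /= Pa; apply: foldl_of_decomp.
  by apply/allP => k; rewrite mem_filter => /andP[_ /(allP h1)].
by apply/allP => k; rewrite mem_filter => /andP[_ /(allP h2)].
Qed.

Lemma best_mem s a : rk_best w eps x s = Some a ->
  a \in s /\ forall k, k \in s -> val k <= val a.
Proof.
rewrite rk_bestE => /foldl_max [h1 h2 _]; split => //.
by case: h1.
Qed.

Lemma best_none s : rk_best w eps x s = None -> s = [::].
Proof. by rewrite rk_bestE => /foldl_none []. Qed.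

Lemma best_some s : s != [::] -> exists a, rk_best w eps x s = Some a.
Proof.
case h: (rk_best w eps x s) => [a|]; first by exists a.
by rewrite (best_none h).
Qed.

End PartA.
Section Runs.
Variables (R : realType) (S : finType) (n : nat).
Variables (E : 'I_n -> S -> bool) (w : S -> R) (eps : R) (x : S -> R) (j : S).

Local Notation val := (rk_val w eps x).
Definition Ej := fun b k => E b k && (k != j).
Local Notation stepA := (rk_step E w eps x).
Local Notation stepB := (rk_step Ej w eps x).
Definition st0 : {set S} * ('I_n -> option S) := (finset.set0, fun _ => None).

Definition avl (Ex : 'I_n -> S -> bool) (M : {set S}) b :=
  [seq k <- enum S | Ex b k && (k \notin M)].

Lemma rk_stepE Ex st b : rk_step Ex w eps x st b =
  match rk_best w eps x (avl Ex st.1 b) with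
  | None => st
  | Some a => (a |: st.1, fun b' => if b' == b then Some a else st.2 b')
  end.
Proof. by []. Qed.

Lemma avlB MA MB d b : j |: MB = d |: MA ->
  avl Ej MB b = seq.filter (fun k => k \notin j |: MB) (avl E MA b).
Proof.
move=> hM; rewrite /avl -filter_predI; apply: eq_filter => k /=.
rewrite /Ej in_setU1 negb_or.
case: (k =P j) => [->|/eqP kj] /=; first by rewrite andbF.
case kMB: (k \in MB) => /=; first by rewrite !andbF.
have : k \notin j |: MB by rewrite in_setU1 negb_or kj kMB.
rewrite hM in_setU1 negb_or => /andP[_ ->].
by rewrite !andbT.
Qed.

Lemma inv_run s : exists d,
  j |: (foldl stepB st0 s).1 = d |: (foldl stepA st0 s).1.
Proof.
elim/last_ind: s => [|s b [d IH]].
  by exists j; rewrite /= !finset.setU0.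
rewrite !foldl_rcons.
set A := foldl stepA st0 s in IH *; set B := foldl stepB st0 s in IH *.
rewrite !rk_stepE.
have hB := avlB b IH.
case hA: (rk_best w eps x (avl E A.1 b)) => [a|]; last first.
  rewrite hB (best_none hA) /=; by exists d.
have [aA _] := best_mem hA.
have aMA : a \notin A.1 by move: aA; rewrite mem_filter => /andP[/andP[_ ->]].
case aB: (a \in j |: B.1).
  have ad : a = d.
    move: aB; rewrite IH in_setU1 (negbTE aMA) orbF => /eqP //.
  case: (rk_best w eps x (avl Ej B.1 b)) => [c|] /=.
    by exists c; rewrite finset.setUCA IH ad.
  by exists a; rewrite IH ad finset.setUA finset.setUid.
rewrite hB (best_filter hA); last by rewrite aB.
by exists d => /=; rewrite finset.setUCA IH finset.setUCA.
Qed.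

Lemma stay2 (Ex : 'I_n -> S -> bool) (st : {set S} * ('I_n -> option S)) (s : seq 'I_n) (i : 'I_n) : i \notin s ->
  (foldl (rk_step Ex w eps x) st s).2 i = st.2 i.
Proof.
elim: s st => [|b s IH] st //=; rewrite in_cons negb_or => /andP[ib iss].
rewrite IH // rk_stepE; case: (rk_best _ _ _ _) => //= a.
by rewrite (negbTE ib).
Qed.

Lemma mono1 (Ex : 'I_n -> S -> bool) (st : {set S} * ('I_n -> option S)) (s : seq 'I_n) : st.1 \subset (foldl (rk_step Ex w eps x) st s).1.
Proof.
elim: s st => [|b s IH] st //=.
apply: fintype.subset_trans (IH _); rewrite rk_stepE.
case: (rk_best _ _ _ _) => //= a; exact: finset.subsetUr.
Qed.

Hypothesis hv : forall k, 0 <= val k.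

Definition pick (Ex : 'I_n -> S -> bool) (st : {set S} * ('I_n -> option S)) (i : 'I_n) := rk_best w eps x (avl Ex st.1 i).

Lemma run_split Ex (i : 'I_n) : exists pre post,
  rk_run Ex w eps x = foldl (rk_step Ex w eps x)
      (rk_step Ex w eps x (foldl (rk_step Ex w eps x) st0 pre) i) post /\
  [/\ enum 'I_n = pre ++ i :: post, i \notin pre & i \notin post].
Proof.
have hi : i \in enum 'I_n by rewrite mem_enum.
have [pre [post hE]] : exists pre post, enum 'I_n = pre ++ i :: post.
  by move: hi; case/splitPr => pre post; exists pre, post.
exists pre, post; split; first by rewrite /rk_run hE foldl_cat.
have := enum_uniq 'I_n; rewrite hE cat_uniq /= => /and3P[_ h1 /andP[h2 _]].
split => //; move: h1; apply: contra => ip /=; by rewrite ip.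
Qed.

Lemma util_eq Ex (i : 'I_n) pre post :
  rk_run Ex w eps x = foldl (rk_step Ex w eps x)
      (rk_step Ex w eps x (foldl (rk_step Ex w eps x) st0 pre) i) post ->
  i \notin pre -> i \notin post ->
  rk_util Ex w eps x i =
  match pick Ex (foldl (rk_step Ex w eps x) st0 pre) i with
  | Some a => val a | None => 0 end.
Proof.
move=> hr ipre ipost; rewrite /rk_util hr stay2 // rk_stepE /pick.
case: (rk_best _ _ _ _) => [a|] /=; first by rewrite eqxx.
by rewrite stay2.
Qed.

Variable (i : 'I_n).
Hypothesis hij : E i j.

Lemma claimA1 : rk_util Ej w eps x i <= rk_util E w eps x i.
Proof.
have [pre [post [hr [hE ip1 ip2]]]] := run_split E i.
have hr' : rk_run Ej w eps x = foldl stepB (stepB (foldl stepB st0 pre) i) post.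
  by rewrite /rk_run hE foldl_cat.
rewrite (util_eq hr ip1 ip2) (util_eq hr' ip1 ip2).
have [d IH] := inv_run pre.
rewrite /pick (avlB i IH).
case hB: (rk_best _ _ _ (seq.filter _ _)) => [c|]; last first.
  by case: (rk_best _ _ _ _) => // a.
have [cB _] := best_mem hB.
move: cB; rewrite mem_filter => /andP[_ cA].
have [a ha] : exists a, rk_best w eps x (avl E (foldl stepA st0 pre).1 i) = Some a.
  by apply: best_some; apply/eqP => h; rewrite h in cA.
by rewrite ha; have [_ ->] := best_mem ha.
Qed.

Lemma claimA2 : rk_util Ej w eps x i < val j ->
  j \in (rk_run E w eps x).1.
Proof.
move=> hlt.
have [pre [post [hr [hE ip1 ip2]]]] := run_split E i.
have hr' : rk_run Ej w eps x = foldl stepB (stepB (foldl stepB st0 pre) i) post.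
  by rewrite /rk_run hE foldl_cat.
move: hlt; rewrite (util_eq hr' ip1 ip2).
set A := foldl stepA st0 pre.
case jA1: (j \in (stepA A i).1).
  by move=> _; rewrite hr; move: jA1; apply: fintype.subsetP; exact: mono1.
have [d IH] := inv_run pre; rewrite -/A in IH.
have jA : j \notin A.1.
  apply/negP => h; move: jA1; rewrite rk_stepE.
  by case: (rk_best _ _ _ _) => [a|] /=; rewrite ?in_setU1 h ?orbT.
have dj : d = j.
  have : j \in j |: (foldl stepB st0 pre).1 by rewrite in_setU1 eqxx.
  by rewrite IH in_setU1 (negbTE jA) orbF => /eqP.
have jav : j \in avl E A.1 i by rewrite mem_filter hij jA mem_enum.
have [a ha] : exists a, rk_best w eps x (avl E A.1 i) = Some a.
  by apply: best_some; apply/eqP => h; rewrite h in jav.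
have [aA amax] := best_mem ha.
have aj : a != j.
  apply/eqP => aj; move: jA1; rewrite rk_stepE ha /= in_setU1 aj eqxx //.
have aMA : a \notin A.1 by move: aA; rewrite mem_filter => /andP[/andP[_ ->]].
rewrite /pick (avlB i IH) (best_filter ha); last first.
  by rewrite IH dj in_setU1 negb_or aj aMA.
by rewrite ltNge (amax _ jav).
Qed.

End Runs.

Lemma best_ext (R : realType) (S : finType) w eps (x x' : S -> R) (j : S) s :
  (forall k, k != j -> rk_val w eps x k = rk_val w eps x' k) -> j \notin s ->
  rk_best w eps x s = rk_best w eps x' s.
Proof.
move=> h; rewrite !rk_bestE.
have : forall b, (None : option S) = Some b -> b != j by [].
move: None.
elim: s => [|a s IH] o //= ho; rewrite in_cons negb_or => /andP[aj js].
have -> : bstep w eps x o a = bstep w eps x' o a.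
  case: o ho => [b|] //= ho.
  have hb : b != j by exact: ho.
  by rewrite (h b hb) (h a); last by rewrite eq_sym.
apply: IH => // b.
case: o ho => [b'|] /= ho; last by move=> [<-]; rewrite eq_sym.
by case: ifP => _ [<-]; [rewrite eq_sym | apply: ho].
Qed.
Section Indep.
Variables (R : realType) (S : finType) (n : nat).
Variables (E : 'I_n -> S -> bool) (w : S -> R) (eps : R) (j : S).

Lemma avlEj_notj (M : {set S}) b : j \notin avl (Ej E j) M b.
Proof. by rewrite mem_filter /Ej eqxx !andbF. Qed.

Lemma run_ext (x x' : S -> R) : (forall k, k != j -> x k = x' k) ->
  rk_run (Ej E j) w eps x = rk_run (Ej E j) w eps x'.
Proof.
move=> hx.
have hv k : k != j -> rk_val w eps x k = rk_val w eps x' k.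
  by move=> kj; rewrite /rk_val hx.
rewrite /rk_run; move: (finset.set0, _) (enum 'I_n).
move=> st s; elim: s st => [|b s IH] st //=.
rewrite IH; congr foldl.
rewrite !rk_stepE (best_ext hv) //; exact: avlEj_notj.
Qed.

Lemma foldl_notj (x : S -> R) (st : {set S} * ('I_n -> option S)) s :
  (forall b k, st.2 b = Some k -> k != j) ->
  forall b k, (foldl (rk_step (Ej E j) w eps x) st s).2 b = Some k -> k != j.
Proof.
elim: s st => [|c s IH] st //= h; apply: IH => b' k'; rewrite rk_stepE.
case hb: (rk_best _ _ _ _) => [a|] /=; last exact: h.
case: ifP => _; last exact: h.
move=> [<-]; have [ha _] := best_mem hb.
by move: (avlEj_notj st.1 c); apply: contraNneq => aj; rewrite -{1}aj.
Qed.

Lemma run_notj (x : S -> R) b k : (rk_run (Ej E j) w eps x).2 b = Some k -> k != j.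
Proof. by apply: foldl_notj. Qed.

Lemma util_ext (x x' : S -> R) (i : 'I_n) : (forall k, k != j -> x k = x' k) ->
  rk_util (Ej E j) w eps x i = rk_util (Ej E j) w eps x' i.
Proof.
move=> hx; rewrite /rk_util -(run_ext hx).
case h: ((rk_run (Ej E j) w eps x).2 i) => [k|] //.
by rewrite /rk_val hx //; exact: run_notj h.
Qed.

End Indep.
Section Meas.
Local Open Scope classical_set_scope.
Variables (R : realType) (S : finType) (n : nat).
Variables (d : measure_display) (T : measurableType d) (p : T -> S -> R).
Hypothesis hp : forall k, measurable_fun setT (fun t => p t k).

Definition dm (V : finType) (f : T -> V) := forall v, measurable (f @^-1` [set v]).

Lemma dm_bind (V W : finType) (f : T -> V) (g : V -> T -> W) :
  dm f -> (forall v, dm (g v)) -> dm (fun t => g (f t) t).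
Proof.
move=> hf hg u.
have -> : (fun t => g (f t) t) @^-1` [set u] =
  \bigcup_(v in [set: V]) (f @^-1` [set v] `&` (g v) @^-1` [set u]).
  apply/seteqP; split => [t /= htu|t [v _ [/= <- htu]]] //.
  by exists (f t) => //.
apply: fin_bigcup_measurable; first exact: finite_finset.
by move=> v _; apply: measurableI; [exact: hf | exact: hg].
Qed.

Lemma dm_cst (V : finType) (v0 : V) : dm (fun _ => v0).
Proof.
move=> v; case: (eqVneq v0 v) => [->|nv].
  by have -> : (fun _ : T => v) @^-1` [set v] = setT by apply/seteqP.
have -> : (fun _ : T => v0) @^-1` [set v] = set0; last exact: measurable0.
by apply/seteqP; split => t //= h; move: nv; rewrite h eqxx.
Qed.

Lemma dm_comp (V W : finType) (f : T -> V) (h : V -> W) : dm f -> dm (fun t => h (f t)).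
Proof. by move=> hf; apply: (dm_bind (g := fun v _ => h v)) => // v; exact: dm_cst. Qed.

Lemma dm_bool (c : T -> bool) : measurable_fun setT c -> dm c.
Proof.
move=> hc v; have := hc measurableT [set v] I.
by rewrite setTI.
Qed.

Lemma dm_if (c : T -> bool) (V : finType) (f1 f2 : T -> V) :
  measurable_fun setT c -> dm f1 -> dm f2 ->
  dm (fun t => if c t then f1 t else f2 t).
Proof.
move=> hc h1 h2.
apply: (dm_bind (f := c) (g := fun b t => if b then f1 t else f2 t)).
  exact: dm_bool.
by case.
Qed.

Lemma mf_bind (V : finType) (f : T -> V) (g : V -> T -> R) :
  dm f -> (forall v, measurable_fun setT (g v)) ->
  measurable_fun setT (fun t => g (f t) t).
Proof.
move=> hf hg _ Y mY; rewrite setTI.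
have -> : (fun t => g (f t) t) @^-1` Y =
  \bigcup_(v in [set: V]) (f @^-1` [set v] `&` (g v) @^-1` Y).
  apply/seteqP; split => [t /= htu|t [v _ [/= <- htu]]] //.
  by exists (f t) => //.
apply: fin_bigcup_measurable; first exact: finite_finset.
move=> v _; apply: measurableI; first exact: hf.
by have := hg v measurableT Y mY; rewrite setTI.
Qed.

Variables (w : S -> R) (eps : R).

Lemma mval k : measurable_fun setT (fun t => rk_val w eps (p t) k).
Proof.
rewrite /rk_val; apply: measurable_realfun.measurable_funM; first exact: measurable_cst.
apply: measurable_realfun.measurable_funB; first exact: measurable_cst.
apply: measurableT_comp; first exact: measurable_expR.
apply: measurable_realfun.measurable_funB; last exact: measurable_cst.
apply: measurable_realfun.measurable_funB; last exact: measurable_cst.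
exact: hp.
Qed.

Lemma dm_foldl_best (s : seq S) (o : T -> option S) : dm o ->
  dm (fun t => foldl (bstep w eps (p t)) (o t) s).
Proof.
elim: s o => [|a s IH] o ho //=.
apply: (IH (fun t => bstep w eps (p t) (o t) a)).
apply: (dm_bind (f := o) (g := fun v t => bstep w eps (p t) v a)) => //.
case => [b|] /=; last exact: dm_cst.
apply: dm_if; [|exact: dm_cst|exact: dm_cst].
by apply: measurable_fun_ltr; exact: mval.
Qed.

Lemma dm_best (s : seq S) : dm (fun t => rk_best w eps (p t) s).
Proof. by apply: dm_foldl_best; exact: dm_cst. Qed.

Variable (E : 'I_n -> S -> bool).

Definition encS (st : {set S} * ('I_n -> option S)) : {set S} * {ffun 'I_n -> option S} :=
  (st.1, [ffun b => st.2 b]).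

Definition stepE (b : 'I_n) (v : {set S} * {ffun 'I_n -> option S}) (o : option S) :
  {set S} * {ffun 'I_n -> option S} :=
  match o with
  | None => v
  | Some a => (a |: v.1, [ffun b' => if b' == b then Some a else v.2 b'])
  end.

Lemma encS_step (Ex : 'I_n -> S -> bool) x st b :
  encS (rk_step Ex w eps x st b) = stepE b (encS st) (rk_best w eps x (avl Ex st.1 b)).
Proof.
rewrite rk_stepE /encS /=.
case: (rk_best _ _ _ _) => [a|] //=.
by congr pair; apply/ffunP => b'; rewrite !ffunE.
Qed.

Lemma dm_foldl_run (Ex : 'I_n -> S -> bool) (s : seq 'I_n) (st : T -> {set S} * ('I_n -> option S)) :
  dm (fun t => encS (st t)) ->
  dm (fun t => encS (foldl (rk_step Ex w eps (p t)) (st t) s)).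
Proof.
elim: s st => [|b s IH] st hst //=.
apply: (IH (fun t => rk_step Ex w eps (p t) (st t) b)).
have -> : (fun t => encS (rk_step Ex w eps (p t) (st t) b)) =
  (fun t => (fun v t => stepE b v (rk_best w eps (p t) (avl Ex v.1 b))) (encS (st t)) t).
  by apply: funext => t; rewrite encS_step.
apply: (dm_bind (f := fun t => encS (st t))
  (g := fun v t => stepE b v (rk_best w eps (p t) (avl Ex v.1 b)))) => // v.
apply: (dm_comp (f := fun t => rk_best w eps (p t) (avl Ex v.1 b))); exact: dm_best.
Qed.

Lemma dm_run (Ex : 'I_n -> S -> bool) : dm (fun t => encS (rk_run Ex w eps (p t))).
Proof. by apply: dm_foldl_run; exact: dm_cst. Qed.

Lemma mF (j : S) (i : 'I_n) :
  measurable_fun setT (fun t => rk_rev E w eps (p t) j + rk_util E w eps (p t) i).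
Proof.
have -> : (fun t => rk_rev E w eps (p t) j + rk_util E w eps (p t) i) =
  (fun t => (fun (v : {set S} * {ffun 'I_n -> option S}) t => (if j \in v.1 then w j * expR (p t j - 1 - eps) else 0) +
     match v.2 i with Some k => rk_val w eps (p t) k | None => 0 end)
     (encS (rk_run E w eps (p t))) t).
  by apply: funext => t; rewrite /= ffunE.
apply: (mf_bind (f := fun t => encS (rk_run E w eps (p t)))
  (g := fun (v : {set S} * {ffun 'I_n -> option S}) t => (if j \in v.1 then w j * expR (p t j - 1 - eps) else 0) +
     match v.2 i with Some k => rk_val w eps (p t) k | None => 0 end)); first exact: dm_run.
move=> v; apply: measurable_realfun.measurable_funD.
  case: (j \in v.1); last exact: measurable_cst.
  apply: measurable_realfun.measurable_funM; first exact: measurable_cst.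
  apply: measurableT_comp; first exact: measurable_expR.
  apply: measurable_realfun.measurable_funB; last exact: measurable_cst.
  apply: measurable_realfun.measurable_funB; last exact: measurable_cst.
  exact: hp.
case: (v.2 i) => [k|]; last exact: measurable_cst.
exact: mval.
Qed.

End Meas.
Section Iter.
Local Open Scope classical_set_scope.
Local Open Scope ereal_scope.
Variables (R : realType) (S : finType).
Local Notation mu := (@lebesgue_measure R).
Local Notation D01 := (`[0%R, 1%R] : set R).

Definition upd (x0 : S -> R) (a : S) (t : R) : S -> R :=
  fun k => if k == a then t else x0 k.

Lemma iter_cons (l : seq S) f x0 a :
  iter_unif_exp (a :: l) f x0 = \int[mu]_(t in D01) iter_unif_exp l f (upd x0 a t).
Proof. by []. Qed.

Definition Good (f : (S -> R) -> R) := forall d (T : measurableType d) (p : T -> S -> R),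
  (forall k, measurable_fun setT (fun t => p t k)) -> measurable_fun setT (fun t => f (p t)).

Variable f : (S -> R) -> R.
Hypothesis f0 : forall x, (0 <= f x)%R.
Hypothesis fG : Good f.

Lemma iter_ge0 l x0 : 0 <= iter_unif_exp l f x0.
Proof.
elim: l x0 => [|a l IH] x0 /=; first by rewrite lee_fin.
by apply: integral_ge0 => t _; exact: IH.
Qed.

Lemma mupd d (T : measurableType d) (p : T -> S -> R) (a : S) :
  (forall k, measurable_fun setT (fun t => p t k)) ->
  forall k, measurable_fun setT (fun z : T * R => upd (p z.1) a z.2 k).
Proof.
move=> hp k; rewrite /upd; case: (k == a); first exact: measurable_snd.
exact: (measurableT_comp (hp k) measurable_fst).
Qed.

Lemma patch_ge0 (U : Type) (A : set U) (g : U -> \bar R) :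
  (forall z, 0 <= g z) -> forall z, 0 <= (g \_ A) z.
Proof. by move=> h z; rewrite patchE; case: ifP. Qed.

Lemma iter_meas l : forall d (T : measurableType d) (p : T -> S -> R),
  (forall k, measurable_fun setT (fun t => p t k)) ->
  measurable_fun setT (fun t => iter_unif_exp l f (p t)).
Proof.
elim: l => [|a l IH] d T p hp /=.
  by apply/(measurable_EFinP setT (fun t => f (p t))); exact: fG.
pose H := fun z : T * R => iter_unif_exp l f (upd (p z.1) a z.2).
pose G := H \_ (setT `*` D01).
have mH : measurable_fun setT H by apply: IH; exact: mupd.
have mG : measurable_fun setT G.
  apply/(measurable_restrictT _ _).1; first exact: measurableX.
  exact: measurable_funS mH.
have G0 : forall z, 0 <= G z by apply: patch_ge0 => z; exact: iter_ge0.
have := measurable_fun_fubini_tonelli_F (m2 := mu) G mG G0.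
congr measurable_fun; apply: funext => t.
rewrite /fubini_F [RHS]integral_mkcond; apply: eq_integral => s _.
rewrite /G !patchE /=.
case: (boolP (s \in D01)) => hs.
  by rewrite mem_set //; split => //=; exact/set_mem.
rewrite memNset //; move=> [_ /= h]; apply: (negP hs); exact/mem_set.
Qed.


Lemma iter2_mkcond (K : R -> R -> \bar R) :
  \int[mu]_(t in D01) \int[mu]_(s in D01) K t s =
  \int[mu]_t \int[mu]_s ((fun z => K z.1 z.2) \_ (D01 `*` D01)) (t, s).
Proof.
rewrite integral_mkcond; apply: eq_integral => t _; rewrite patchE.
case: (boolP (t \in D01)) => ht.
  rewrite integral_mkcond; apply: eq_integral => s _; rewrite !patchE.
  case: (boolP (s \in D01)) => hs.
    by rewrite mem_set //; split; exact/set_mem.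
  by rewrite memNset //; move=> [_ /= h]; apply: (negP hs); exact/mem_set.
rewrite integral0_eq // => s _; rewrite patchE memNset //.
by move=> [/= h _]; apply: (negP ht); exact/mem_set.
Qed.

Lemma upd_comm x0 a b t s : a != b -> upd (upd x0 a t) b s = upd (upd x0 b s) a t.
Proof.
move=> ab; apply: funext => k; rewrite /upd.
case: (eqVneq k b) => [->|kb]; last by [].
by rewrite eq_sym (negbTE ab).
Qed.

Lemma iter_swap a b l x0 : a != b ->
  iter_unif_exp (a :: b :: l) f x0 = iter_unif_exp (b :: a :: l) f x0.
Proof.
move=> ab; rewrite !iter_cons.
under eq_integral do rewrite iter_cons.
under [RHS]eq_integral do rewrite iter_cons.
rewrite (iter2_mkcond (fun t s => iter_unif_exp l f (upd (upd x0 a t) b s))).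
rewrite (iter2_mkcond (fun s t => iter_unif_exp l f (upd (upd x0 b s) a t))).
set G := (fun z => _) \_ _.
have mG : measurable_fun setT G.
  apply/(measurable_restrictT _ _).1; first exact: measurableX.
  apply: measurable_funS (iter_meas _ _) => //.
  move=> k; rewrite /upd; case: (k == b); first exact: measurable_snd.
  case: (k == a); first exact: measurable_fst.
  exact: measurable_cst.
have G0 : forall z, 0 <= G z by apply: patch_ge0 => z; exact: iter_ge0.
rewrite (fubini_tonelli (m1 := mu) (m2 := mu) G mG G0).
apply: eq_integral => s _; apply: eq_integral => t _.
rewrite /G !patchE /= (upd_comm _ _ _ ab).
congr (if _ then _ else _).
apply/idP/idP => /set_mem [h1 h2]; apply/mem_set; by split.
Qed.


Lemma iter_move (j : S) l x0 : j \notin l ->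
  iter_unif_exp (j :: l) f x0 = iter_unif_exp (l ++ [:: j]) f x0.
Proof.
elim: l x0 => [|k l IH] x0 //; rewrite in_cons negb_or => /andP[jk jl].
rewrite (iter_swap _ _ jk) cat_cons !iter_cons; apply: eq_integral => t _.
exact: IH.
Qed.

Lemma iter_move_mid (j : S) pre post x0 : j \notin post ->
  iter_unif_exp (pre ++ j :: post) f x0 = iter_unif_exp (pre ++ post ++ [:: j]) f x0.
Proof.
move=> jp; elim: pre x0 => [|a pre IH] x0; first exact: iter_move.
by rewrite !cat_cons !iter_cons; apply: eq_integral => t _; exact: IH.
Qed.

Definition cube (x0 : S -> R) := forall k, (0 <= x0 k <= 1)%R.

Lemma cube_upd x0 a t : cube x0 -> t \in D01 -> cube (upd x0 a t).
Proof.
move=> hx /set_mem /=; rewrite in_itv /= => ht k; rewrite /upd.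
by case: (k == a).
Qed.

Lemma mu01 : mu D01 = 1%E.
Proof. by rewrite lebesgue_measure_itv /= lte_fin ltr01 oppr0 adde0. Qed.

Lemma iter_lb (K : R) (j : S) :
  (forall x0, cube x0 -> K%:E <= iter_unif_exp [:: j] f x0) ->
  forall l x0, cube x0 -> K%:E <= iter_unif_exp (l ++ [:: j]) f x0.
Proof.
move=> hK; elim => [|a l IH] x0 hx0; first exact: hK.
have [K0|K0] := leP 0%R K; last first.
  by apply: le_trans (iter_ge0 _ _); rewrite lee_fin ltW.
rewrite cat_cons iter_cons.
apply: (@le_trans _ _ (\int[mu]_(t in D01) (cst K%:E) t)).
  rewrite integral_cst // [X in _ * X](_ : _ = 1%E) ?mule1 //; exact: mu01.
apply: (@ge0_le_integral _ _ _ mu D01 _ (cst K%:E)).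
- by [].
- by move=> t _; rewrite lee_fin.
- exact: measurable_cst.
- apply: measurable_funS (iter_meas _ _) => //.
  move=> k; rewrite /upd; case: (k == a); first exact: measurable_id.
  exact: measurable_cst.
- by move=> t ht /=; apply: IH; exact: (cube_upd _ hx0 (mem_set ht)).
Qed.

End Iter.

Lemma iter_eq_cube (R : realType) (S : finType) (g h : (S -> R) -> R) :
  (forall x, cube x -> g x = h x) ->
  forall l x0, cube x0 -> iter_unif_exp l g x0 = iter_unif_exp l h x0.
Proof.
move=> hgh; elim => [|a l IH] x0 hx0 /=; first by rewrite hgh.
apply: eq_integral => t ht; apply: IH; exact: cube_upd.
Qed.
Section FTC.
Local Open Scope classical_set_scope.
Variable (R : realType).
Local Notation mu := (@lebesgue_measure R).

Lemma ftc_exp (k a : R) : (0 < a)%R ->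
  (\int[mu]_(t in `[0%R, a]) (k * expR t)%:E = (k * expR a - k * expR 0)%:E)%E.
Proof.
move=> a0.
have ck : continuous (fun t : R^o => (k * expR t : R^o)).
  move=> z; apply: (@continuousM _ R^o (fun=> k) (@expR R)).
    exact: (@cst_continuous R^o R^o k z).
  exact: continuous_expR.
rewrite EFinB.
apply: (@continuous_FTC2 _ _ (fun t => k * expR t)) => //.
- exact: (@continuous_subspaceT R^o R^o _ _ ck).
- split.
  + by move=> z _; exact: ex_derive.
  + by apply/cvg_at_right_filter; exact: ck.
  + by apply/cvg_at_left_filter; exact: ck.
- move=> z _; rewrite derive1Ml; last exact: ex_derive.
  by rewrite derive1E; have /funeqP -> := @derive_expR R.
Qed.

End FTC.
Section Piece.
Local Open Scope classical_set_scope.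
Variable (R : realType).
Local Notation mu := (@lebesgue_measure R).
Local Notation D01 := (`[0%R, 1%R] : set R).

Lemma mem_itvE (t : R) (i : interval R) : (t \in ([set` i] : set R)) = (t \in i).
Proof. by apply/idP/idP => [/set_mem|h] //; apply/mem_set. Qed.

Lemma integral_cst01 (u : R) : (\int[mu]_(t in D01) u%:E = u%:E)%E.
Proof.
rewrite (@integral_cst _ _ _ mu _ (measurable_itv _) u%:E) [X in (_ * X)%E](_ : _ = 1%E) ?mule1 //.
exact: mu01.
Qed.

Lemma integral_piece (u k a : R) : (0 < a <= 1)%R -> (0 <= u)%R -> (0 <= k)%R ->
  (\int[mu]_(t in D01) (u + (if t < a then k * expR t else 0))%:E =
   (u + (k * expR a - k * expR 0))%:E)%E.
Proof.
move=> /andP[a0 a1] u0 k0.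
under eq_integral do rewrite EFinD.
have mite : measurable_fun D01 (fun t => (if t < a then k * expR t else 0)%:E).
  apply/measurable_EFinP; apply: measurable_funTS.
  apply: measurable_fun_ifT.
    by apply: measurable_fun_ltr; [exact: measurable_id | exact: measurable_cst].
  apply: measurable_realfun.measurable_funM; first exact: measurable_cst.
    exact: measurable_expR.
  exact: measurable_cst.
rewrite ge0_integralD //; last first.
  move=> t _; rewrite lee_fin; case: ifP => // _.
  by apply: mulr_ge0 => //; exact: ltW (expR_gt0 _).
rewrite integral_cst01 EFinD; congr (_ + _)%E.
transitivity (\int[mu]_(t in `[0%R, a[) (k * expR t)%:E)%E.
  rewrite integral_mkcond [RHS]integral_mkcond.
  apply: eq_integral => t _; rewrite !patchE !mem_itvE !in_itv /=.
  case: (leP 0 t) => t0 /=; last by [].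
  case: (ltP t a) => ta /=.
    by rewrite (ltW (lt_le_trans ta a1)).
  by case: (t <= 1).
have mf : measurable_fun `[0%R, a[ (fun t => (k * expR t)%:E).
  apply/measurable_EFinP; apply: measurable_funTS.
  apply: measurable_realfun.measurable_funM; first exact: measurable_cst.
  exact: measurable_expR.
transitivity (\int[mu]_(t in `[0%R, a]) (k * expR t)%:E)%E.
  exact: (integral_itv_bndo_bndc mf).
exact: ftc_exp.
Qed.

End Piece.
Section Main.
Local Open Scope classical_set_scope.
Variables (R : realType) (S : finType) (n : nat) (E : 'I_n -> S -> bool).
Variables (w : S -> R) (eps : R).
Hypotheses (heps : (0 < eps)%R) (hw : forall j, (0 <= w j)%R).
Variables (i : 'I_n) (j : S).
Hypothesis hij : E i j.
Local Notation mu := (@lebesgue_measure R).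
Local Notation D01 := (`[0%R, 1%R] : set R).

Definition FF (x : S -> R) := (rk_rev E w eps x j + rk_util E w eps x i)%R.
Definition FP (x : S -> R) := Num.max (FF x) 0%R.

Lemma val_ge0 x k : cube x -> (0 <= rk_val w eps x k)%R.
Proof.
move=> hx; rewrite /rk_val; apply: mulr_ge0 => //.
rewrite subr_ge0 expR_le1; have := hx k => /andP[_ h]; have he := heps.
rewrite -addrA -opprD subr_le0; apply: le_trans h _; rewrite lerDl; exact: ltW.
Qed.

Lemma FF_ge0 x : cube x -> (0 <= FF x)%R.
Proof.
move=> hx; rewrite /FF /rk_rev /rk_util; apply: addr_ge0.
  by case: ifP => // _; apply: mulr_ge0; [exact: hw | exact: ltW (expR_gt0 _)].
by case: (_.2 i) => // k; exact: val_ge0.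
Qed.

Lemma FP_ge0 x : (0 <= FP x)%R.
Proof. by rewrite /FP le_max lexx orbT. Qed.

Lemma FP_FF x : cube x -> FP x = FF x.
Proof. by move=> hx; rewrite /FP max_l //; exact: FF_ge0. Qed.

Lemma FP_good : Good FP.
Proof.
move=> d T p hp; rewrite /FP /FF.
exact: (measurable_maxr (mF hp w eps E j i) (measurable_cst _)).
Qed.

Variable x0 : S -> R.
Hypothesis hx0 : cube x0.
Let u := rk_util (Ej E j) w eps x0 i.
Let c := w j.
Let g t := expR (t - 1 - eps).

Lemma u_ge0 : (0 <= u)%R.
Proof. by rewrite /u /rk_util; case: (_.2 i) => // k; exact: val_ge0. Qed.

Lemma F_lb t a : t \in D01 -> (t < a -> u < c * (1 - g t))%R ->
  (u + (if t < a then c * g t else 0) <= FF (upd x0 j t))%R.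
Proof.
move=> ht hta.
have hX := cube_upd j hx0 ht.
have hu : rk_util (Ej E j) w eps (upd x0 j t) i = u.
  by apply: util_ext => k kj; rewrite /upd (negbTE kj).
have h1 := claimA1 E j (fun k => val_ge0 k hX) i.
rewrite hu in h1.
rewrite /FF addrC; apply: lerD => //.
rewrite /rk_rev; case: ifP => tA.
  case: ifP => jin; last first.
    exfalso; move: jin; rewrite (claimA2 hij) //.
    by rewrite hu /rk_val /upd eqxx; exact: hta.
  by rewrite /upd eqxx.
by case: ifP => // _; apply: mulr_ge0; [exact: hw | exact: ltW (expR_gt0 _)].
Qed.

Lemma FP_meas : measurable_fun D01 (fun t => (FP (upd x0 j t))%:E).
Proof.
apply/measurable_EFinP; apply: measurable_funTS.
apply: (FP_good (p := fun t => upd x0 j t)) => k.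
rewrite /upd; case: (k == j); [exact: measurable_id | exact: measurable_cst].
Qed.

Lemma gE t : (c * g t = (c * expR (-1 - eps)) * expR t)%R.
Proof. by rewrite /g -mulrA -expRD; congr (_ * expR _); lra. Qed.

Lemma bound_piece a : (0 < a <= 1)%R -> (forall t, (0 <= t)%R -> (t < a -> u < c * (1 - g t))%R) ->
  ((u + (c * g a - c * g 0))%:E <= \int[mu]_(t in D01) (FP (upd x0 j t))%:E)%E.
Proof.
move=> ha hta.
rewrite (gE a) (gE 0) -(integral_piece ha u_ge0); last first.
  by apply: mulr_ge0; [exact: hw | exact: ltW (expR_gt0 _)].
apply: ge0_le_integral => //.
- move=> t _; rewrite lee_fin; apply: addr_ge0; first exact: u_ge0.
  case: ifP => // _; apply: mulr_ge0; last exact: ltW (expR_gt0 _).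
  by apply: mulr_ge0; [exact: hw | exact: ltW (expR_gt0 _)].
- apply/measurable_EFinP; apply: measurable_funTS.
  apply: measurable_realfun.measurable_funD; first exact: measurable_cst.
  apply: measurable_fun_ifT.
    by apply: measurable_fun_ltr; [exact: measurable_id | exact: measurable_cst].
  apply: measurable_realfun.measurable_funM; first exact: measurable_cst.
    exact: measurable_expR.
  exact: measurable_cst.
- exact: FP_meas.
- move=> t ht; rewrite lee_fin -gE FP_FF; last exact: (cube_upd j hx0 (mem_set ht)).
  apply: F_lb; first exact: mem_set ht.
  apply: hta; move: ht => /=; rewrite in_itv /= => /andP[] //.
Qed.

Lemma bound_u : (u%:E <= \int[mu]_(t in D01) (FP (upd x0 j t))%:E)%E.
Proof.
rewrite -integral_cst01.
apply: (@ge0_le_integral _ _ _ mu D01 _ (fun _ => u%:E)).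
- by [].
- by move=> t _; rewrite lee_fin; exact: u_ge0.
- exact: measurable_cst.
- exact: FP_meas.
- move=> t ht; rewrite lee_fin FP_FF; last exact: (cube_upd j hx0 (mem_set ht)).
  have := F_lb (a := 0) (mem_set ht).
  move: ht => /=; rewrite in_itv /= => /andP[t0 _].
  rewrite ltNge t0 addr0; apply => //.
Qed.


Lemma bound_inner :
  (((1 - (expR 1)^-1 - eps) * w j)%:E <= \int[mu]_(t in D01) (FP (upd x0 j t))%:E)%E.
Proof.
have he := heps.
have c0 : (0 <= c)%R by exact: hw.
have u0 := u_ge0.
set q := expR (-1 : R); set y := expR (- eps).
have q0 : (0 < q)%R by exact: expR_gt0.
have q1 : (q < 1)%R by rewrite /q expR_lt1; lra.
have y0 : (0 < y)%R by exact: expR_gt0.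
have y1 : (y <= 1)%R by rewrite /y expR_le1; lra.
have y2 : (1 - eps <= y)%R by have := expR_ge1Dx (- eps); rewrite /y; lra.
have eq1 : (expR 1)^-1 = q by rewrite /q expRN.
have g0 : g 0 = q * y by rewrite /g /q /y -expRD; congr expR; lra.
have g1 : g 1 = y by rewrite /g /y; congr expR; lra.
rewrite eq1 -/c.
have [hA|hA] := ltP u (c * (1 - y)).
  apply: le_trans (bound_piece (a := 1) _ _); last first.
  - move=> t t0 t1.
    have gt : (g t < y)%R by rewrite -g1 /g ltr_expR; lra.
    have : (0 <= c * (y - g t))%R by apply: mulr_ge0 => //; lra.
    nra.
  - by rewrite ltr01 lexx.
  rewrite lee_fin g1 g0.
  have h1 : (0 <= c * ((y - 1 + eps) * (1 - q)))%R by apply: mulr_ge0 => //; apply: mulr_ge0; lra.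
  have h2 : (0 <= c * (eps * q))%R by apply: mulr_ge0 => //; apply: mulr_ge0; lra.
  nra.
have hB1 : (0 <= c * (q * (1 - y)))%R by apply: mulr_ge0 => //; apply: mulr_ge0; lra.
have hB2 : (0 <= c * eps)%R by apply: mulr_ge0 => //; lra.
have [hC|hC] := leP (c * (1 - q * y)) u.
  apply: le_trans bound_u; rewrite lee_fin; nra.
have cpos : (0 < c)%R.
  rewrite lt_neqAle c0 andbT; apply/eqP => hc.
  by move: hC; rewrite -hc mul0r ltNge u0.
set r := (1 - u / c)%R.
have cr : (c * r = c - u)%R.
  by rewrite /r mulrBr mulr1 [c * _]mulrC divfK // gt_eqF.
have rlo : (q * y < r)%R.
  have : (c * (q * y) < c * r)%R by rewrite cr; nra.
  by rewrite ltr_pM2l.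
have rhi : (r <= y)%R.
  have : (c * r <= c * y)%R by rewrite cr; nra.
  by rewrite ler_pM2l.
have r0 : (0 < r)%R by apply: lt_trans rlo; exact: mulr_gt0.
set th := (ln r + 1 + eps)%R.
have gth : g th = r.
  rewrite /g /th (_ : (ln r + 1 + eps - 1 - eps = ln r)%R); last by lra.
  by rewrite lnK // posrE.
have qyE : q * y = expR (-1 - eps) by rewrite /q /y -expRD; congr expR; lra.
have th0 : (0 < th)%R.
  have : (ln (q * y) < ln r)%R by rewrite ltr_ln // posrE mulr_gt0.
  rewrite qyE expRK /th; lra.
have th1 : (th <= 1)%R.
  have : (ln r <= ln y)%R by rewrite ler_ln // posrE.
  rewrite /y expRK /th; lra.
apply: le_trans (bound_piece (a := th) _ _); last first.
- move=> t t0 tth.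
  have gt : (g t < r)%R by rewrite -gth /g ltr_expR; lra.
  have : (0 < c * (r - g t))%R by apply: mulr_gt0 => //; lra.
  nra.
- by rewrite th0 th1.
rewrite lee_fin gth g0; nra.
Qed.

End Main.

Unset Implicit Arguments.

Theorem lemma8 (R : realType) (S : finType) (n : nat)
  (E : 'I_n -> S -> bool) (w : S -> R) (eps : R)
  (heps : 0 < eps) (hw : forall j, 0 <= w j)
  (i : 'I_n) (j : S) (hij : E i j) :
  (((1 - (expR 1)^-1 - eps) * w j)%:E <=
   unif_exp (fun x : S -> R => (rk_rev E w eps x j + rk_util E w eps x i)%R))%E.
Proof.
rewrite /unif_exp.
have c0 : cube (fun _ : S => 0 : R) by move=> k; rewrite lexx ler01.
have fp0 := FP_ge0 E w eps i j.
have fpg := FP_good E w eps i j.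
rewrite (@iter_eq_cube R S _ (FP E w eps i j) _ _ _ c0); last first.
  by move=> x hx; rewrite FP_FF.
have hi : j \in enum S by rewrite mem_enum.
have [pre [post hE]] : exists pre post, enum S = pre ++ j :: post.
  by move: hi; case/splitPr => pre post; exists pre, post.
have jpost : j \notin post.
  by have := enum_uniq S; rewrite hE cat_uniq /= => /and3P[_ _ /andP[]].
rewrite hE (iter_move_mid fp0 fpg) // catA.
apply: (iter_lb fp0 fpg); last exact: c0.
move=> x0 hx0 /=.
exact: (bound_inner heps hw hij hx0).
Qed.
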